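(* Let $p$ be a prime and $X$ a countable set. For every $A\in\mathcal{B}(\mathbb{Q}_p(X))$ we have $\ker(A)=\operatorname{im}(A^* )^\perp$.
   Context: $\mathbb{Q}_p(X)$ is the set of maps $\xi:X\to\mathbb{Q}_p$ with $|\xi(i)|_p\le1$ for all but finitely many $i$, a $\mathbb{Z}_p$-module under coordinatewise operations, with the topology $\tau$ in which $A\subseteq\mathbb{Q}_p(X)$ is open iff for every finite $P\subseteq X$ the set $A\cap\big(\prod_{i\in P}\mathbb{Q}_p\times\prod_{j\in X\setminus P}\mathbb{Z}_p\big)$ is open in the product topology. $\mathcal{B}(\mathbb{Q}_p(X))$ is the set of $\tau$-continuous $\mathbb{Z}_p$-linear maps. The pairing is $\langle\xi,\eta\rangle=\iota\big(\sum_{i\in X}(\xi(i)\eta(i)+\mathbb{Z}_p)\big)\in S^1$ with $\iota:\mathbb{Q}_p/\mathbb{Z}_p\cong\mathbb{Z}[1/p]/\mathbb{Z}\hookrightarrow\mathbb{R}/\mathbb{Z}\cong S^1$ canonical. $A^*$ is the unique operator in $\mathcal{B}(\mathbb{Q}_p(X))$ with $\langle A\xi,\eta\rangle=\langle\xi,A^*\eta\rangle$ for all $\xi,\eta$. For $K\subseteq\mathbb{Q}_p(X)$, $K^\perp=\{\xi:\langle\xi,\eta\rangle=1\ \forall\eta\in K\}$ (trivial value of the pairing). *)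

(* Defs.v *)
(* Q_p is introduced through its defining property as the
   completion of (Q, |.|_p). *)
From HB Require Import structures.
From Stdlib Require List.
From mathcomp Require Import all_boot all_order all_algebra.
Set Implicit Arguments. Unset Strict Implicit. Unset Printing Implicit Defensive.
Import Order.TTheory GRing.Theory Num.Theory.
Local Open Scope ring_scope.

Definition padic_val_rat (p : nat) (q : rat) : int :=
  (logn p `|numq q|%N)%:Z - (logn p `|denq q|%N)%:Z.

Definition padic_abs (p : nat) (q : rat) : rat :=
  if q == 0 then 0 else (p%:R : rat) ^ (- padic_val_rat p q).

(* These
   properties characterize (Q_p, |.|_p) up to isometric isomorphism. *)
Record is_Qp (p : nat) (F : fieldType) (nrm : F -> rat) : Prop := {
  Qp_nrm_ge0 : forall x, 0 <= nrm x;
  Qp_nrm_eq0 : forall x, nrm x = 0 <-> x = 0;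
  Qp_nrmM : forall x y, nrm (x * y) = nrm x * nrm y;
  Qp_nrmD : forall x y, nrm (x + y) <= Num.max (nrm x) (nrm y);
  Qp_nrm_rat : forall q : rat, nrm (ratr q) = padic_abs p q;
  Qp_dense : forall (x : F) (e : rat), 0 < e ->
      exists q : rat, nrm (x - ratr q) < e;
  Qp_complete : forall u : nat -> F,
      (forall e : rat, 0 < e -> exists N, forall m n, (N <= m)%N -> (N <= n)%N ->
           nrm (u m - u n) < e) ->
      exists l : F, forall e : rat, 0 < e -> exists N, forall n, (N <= n)%N ->
           nrm (u n - l) < e }.

Section QpX.
Variables (F : fieldType) (nrm : F -> rat) (X : Type).

Definition QpX (xi : X -> F) : Prop :=
  exists s : seq X, forall i, ~ List.In i s -> nrm (xi i) <= 1.

Definition UP (P : seq X) (xi : X -> F) : Prop :=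
  forall j, ~ List.In j P -> nrm (xi j) <= 1.

(* tau-open subsets of Q_p(X): A is a subset of Q_p(X) and for each finite P,
   A ∩ U_P is open in U_P for the (subspace of the) product topology *)
Definition tau_open (A : (X -> F) -> Prop) : Prop :=
  (forall xi, A xi -> QpX xi) /\
  forall (P : seq X) xi, A xi -> UP P xi ->
    exists (J : seq X) (e : rat), 0 < e /\
      forall eta, UP P eta ->
        (forall j, List.In j J -> nrm (eta j - xi j) < e) -> A eta.

Definition tau_continuous (T : (X -> F) -> (X -> F)) : Prop :=
  forall O, tau_open O -> tau_open (fun xi => QpX xi /\ O (T xi)).

(* B(Q_p(X)): tau-continuous Z_p-linear maps Q_p(X) -> Q_p(X)
   (only the values on Q_p(X) matter) *)
Definition is_operator (T : (X -> F) -> (X -> F)) : Prop :=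
  [/\ forall xi, QpX xi -> QpX (T xi),
      forall xi eta, QpX xi -> QpX eta ->
        T (fun i => xi i + eta i) = (fun i => T xi i + T eta i),
      forall (a : F) xi, nrm a <= 1 -> QpX xi ->
        T (fun i => a * xi i) = (fun i => a * T xi i)
    & tau_continuous T].

(* c represents <xi, eta> in Q_p/Z_p: c = sum over a finite set of indices
   (without repetition) outside of which xi(i) eta(i) lies in Z_p *)
Definition pairing_rep (xi eta : X -> F) (c : F) : Prop :=
  exists s : seq X, List.NoDup s /\
    (forall i, ~ List.In i s -> nrm (xi i * eta i) <= 1) /\
    c = \sum_(i <- s) xi i * eta i.

(* <xi1, eta1> = <xi2, eta2> (equality in Q_p/Z_p, equivalently in S^1
   since iota is injective) *)
Definition pairing_eq (xi1 eta1 xi2 eta2 : X -> F) : Prop :=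
  exists c1 c2, pairing_rep xi1 eta1 c1 /\ pairing_rep xi2 eta2 c2 /\
    nrm (c1 - c2) <= 1.

Definition pairing_trivial (xi eta : X -> F) : Prop :=
  exists c, pairing_rep xi eta c /\ nrm c <= 1.

Definition is_adjoint (A B : (X -> F) -> (X -> F)) : Prop :=
  forall xi eta, QpX xi -> QpX eta -> pairing_eq (A xi) eta xi (B eta).

Definition perp (K : (X -> F) -> Prop) (xi : X -> F) : Prop :=
  QpX xi /\ forall eta, K eta -> pairing_trivial xi eta.

Definition kerop (A : (X -> F) -> (X -> F)) (xi : X -> F) : Prop :=
  QpX xi /\ A xi = (fun _ => 0).

Definition imop (B : (X -> F) -> (X -> F)) (eta : X -> F) : Prop :=
  exists xi, QpX xi /\ eta = B xi.

End QpX.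

(* Main.v *)
Require Import Defs.
From Stdlib Require Import Classical FunctionalExtensionality.
From mathcomp Require Import all_boot all_order all_algebra.
Import Order.TTheory GRing.Theory Num.Theory.
Local Open Scope ring_scope.

Lemma pabs p : prime p -> padic_abs p p%:R = (p%:R)^-1.
Proof.
move=> hp; rewrite /padic_abs /padic_val_rat.
have p0 : (p%:R : rat) != 0 by rewrite pnatr_eq0 -lt0n prime_gt0.
rewrite (negbTE p0).
have -> : (p%:R : rat) = (p%:Z)%:Q by [].
rewrite numq_int denq_int /= logn_prime // eqxx logn1.
have -> : (- ((true:nat)%:Z - (0%N:int))) = -1 by [].
by rewrite exprN1.
Qed.
Lemma pabs1 p : padic_abs p 1 = 1.
Proof. by rewrite /padic_abs /padic_val_rat /= subrr expr0z. Qed.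
Lemma pabsN1 p : padic_abs p (-1) = 1.
Proof. by rewrite /padic_abs /padic_val_rat /= subrr expr0z. Qed.

Lemma pabsN1' p : padic_abs p ((-1)%:~R) = 1.
Proof. by rewrite /padic_abs /padic_val_rat /= subrr expr0z. Qed.

Section Aux.
Context {p : nat} {F : fieldType} {nrm : F -> rat} (hF : is_Qp p nrm).

Lemma nrm0 : nrm 0 = 0.
Proof. by apply/(Qp_nrm_eq0 hF). Qed.

Lemma nrm1 : nrm 1 = 1.
Proof. have -> : (1:F) = ratr (1%:R) by rewrite ratr_nat.
by rewrite (Qp_nrm_rat hF) pabs1. Qed.

Lemma nrmN x : nrm (- x) = nrm x.
Proof.
rewrite -mulN1r (Qp_nrmM hF).
have -> : (-1 : F) = ratr ((-1)%:~R) by rewrite ratr_int.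
by rewrite (Qp_nrm_rat hF) pabsN1' mul1r.
Qed.

Lemma nrmD1 x y : nrm x <= 1 -> nrm y <= 1 -> nrm (x + y) <= 1.
Proof.
move=> hx hy; apply: le_trans (Qp_nrmD hF x y) _.
by rewrite ge_max hx hy.
Qed.

Lemma nrm_sum1 (X : Type) (s : seq X) (w : X -> F) :
  (forall j, List.In j s -> nrm (w j) <= 1) -> nrm (\sum_(j <- s) w j) <= 1.
Proof.
elim: s => [|x s IH] H; first by rewrite big_nil nrm0.
rewrite big_cons; apply: nrmD1; first by apply: H; left.
by apply: IH => j hj; apply: H; right.
Qed.

Lemma sum_diff (X : Type) (w : X -> F) (s s' : seq X) :
  List.NoDup s -> List.NoDup s' ->
  (forall j, List.In j s -> ~ List.In j s' -> nrm (w j) <= 1) ->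
  (forall j, List.In j s' -> ~ List.In j s -> nrm (w j) <= 1) ->
  nrm (\sum_(j <- s) w j - \sum_(j <- s') w j) <= 1.
Proof.
elim: s s' => [|x t IH] s' ns ns' H1 H2.
  rewrite big_nil sub0r nrmN; apply: nrm_sum1 => j hj; exact: H2.
have [xt nt] : ~ List.In x t /\ List.NoDup t by inversion ns.
case: (classic (List.In x s')) => hx.
  have [l1 [l2 e]] := List.in_split _ _ hx; subst s'.
  have [ns'' xs''] := List.NoDup_remove _ _ _ ns'.
  have -> : \sum_(j <- (l1 ++ x :: l2)%list) w j = w x + \sum_(j <- (l1 ++ l2)%list) w j.
    by rewrite !big_cat big_cons /= addrCA.
  rewrite big_cons.
  have -> : forall a b c : F, a + b - (a + c) = b - c by move=> a b c; rewrite opprD addrACA subrr add0r.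
  apply: IH => // j hj hj'.
  - apply: H1; first by right.
    move=> hin; have hjx : j <> x by move=> e; subst j; exact: xt hj.
    apply: hj'; apply List.in_app_or in hin; apply List.in_or_app.
    case: hin => [h|[h|h]]; [by left|by case: hjx|by right].
  - have hjx : j <> x by move=> e; subst j; exact: xs'' hj.
    apply: H2.
      apply List.in_app_or in hj; apply List.in_or_app.
      by case: hj => h; [left|right; right].
    by move=> [e|h]; [apply: hjx; rewrite e|exact: hj' h].
rewrite big_cons -addrA; apply: nrmD1.
  by apply: H1 => //; left.
apply: IH => // j hj hj'.
  by apply: H1 => //; right.
apply: H2 => //; case => // e; subst j; exact: hx hj.
Qed.

Lemma rep_unique {X : Type} {u v : X -> F} {c c'} :
  pairing_rep nrm u v c -> pairing_rep nrm u v c' -> nrm (c - c') <= 1.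
Proof.
move=> [s [ns [hs ->]]] [s' [ns' [hs' ->]]].
apply: sum_diff => // j _ h; [exact: hs' | exact: hs].
Qed.

End Aux.

Theorem lemma2p10 (p : nat) (F : fieldType) (nrm : F -> rat) (X : Type)
  (hp : prime p) (hF : is_Qp p nrm)
  (hX : exists f : X -> nat, injective f)
  (A Astar : (X -> F) -> (X -> F))
  (hA : is_operator nrm A) (hAstar : is_operator nrm Astar)
  (hadj : is_adjoint nrm A Astar) :
  forall xi : X -> F, kerop nrm A xi <-> perp nrm (imop nrm Astar) xi.
Proof.
move=> xi; split.
  move=> [qx hAx]; split => // eta [zeta [qz ->]].
  have [c1 [c2 [r1 [r2 hc]]]] := hadj xi zeta qx qz.
  exists c2; split => //.
  move: r1 => [s [_ [_ e1]]]; move: hc; rewrite e1 hAx big1.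
    by rewrite sub0r (nrmN hF).
  by move=> j _; rewrite mul0r.
move=> [qx hperp]; split => //.
have [f finj] := hX.
apply: functional_extensionality => i.
apply/eqP; apply/negP => /negP hnz.
pose y : F := (p%:R)^-1.
pose a : F := (A xi i)^-1 * y.
pose zeta : X -> F := fun j => if f j == f i then a else 0.
have qz : QpX nrm zeta.
  exists [:: i] => j hj; rewrite /zeta.
  case: eqP => [/finj e|_]; last by rewrite (nrm0 hF).
  by subst j; case: hj; left.
have [c1 [c2 [r1 [r2 hc]]]] := hadj xi zeta qx qz.
have [c [r hcn]] := hperp (Astar zeta) (ex_intro _ zeta (conj qz erefl)).
have h2 := rep_unique hF r2 r.
have hc1 : nrm c1 <= 1.
  have -> : c1 = (c1 - c2) + ((c2 - c) + c) by rewrite !addrA subrK subrK.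
  exact: (nrmD1 hF _ _ hc (nrmD1 hF _ _ h2 hcn)).
have r3 : pairing_rep nrm (A xi) zeta (A xi i * a).
  exists [:: i]; split; first by constructor; [case|constructor].
  split; last by rewrite big_cons big_nil addr0 /zeta eqxx.
  move=> j hj; rewrite /zeta; case: eqP => [/finj e|_].
    by subst j; case: hj; left.
  by rewrite mulr0 (nrm0 hF).
have h3 := rep_unique hF r1 r3.
have hAa : nrm (A xi i * a) <= 1.
  have -> : A xi i * a = c1 + - (c1 - A xi i * a) by rewrite opprB addrC subrK.
  by apply: (nrmD1 hF) => //; rewrite (nrmN hF).
have hy : nrm y <= 1 by move: hAa; rewrite /a mulVKf.
have hpF : nrm (p%:R : F) = (p%:R)^-1.
  have -> : (p%:R : F) = ratr (p%:R) by rewrite ratr_nat.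
  by rewrite (Qp_nrm_rat hF) pabs.
have p0 : (p%:R : F) != 0.
  apply/eqP => e; move: hpF; rewrite e (nrm0 hF) => /eqP.
  rewrite eq_sym invr_eq0 pnatr_eq0; apply/negP.
  by rewrite -lt0n prime_gt0.
have : nrm (y * p%:R) = 1 by rewrite /y mulVf // (nrm1 hF).
rewrite (Qp_nrmM hF) hpF => e1.
have hp1 : (1 : rat) < p%:R by rewrite ltr1n prime_gt1.
have : nrm y * (p%:R)^-1 <= (p%:R : rat)^-1.
  by rewrite ler_piMl // ?invr_ge0 ?ler0n // (Qp_nrm_ge0 hF).
rewrite e1 => h1.
have : (p%:R : rat)^-1 < 1 by rewrite invf_lt1 // (lt_trans ltr01).
by rewrite ltNge h1.
Qed.
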